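(* For every integer $n\ge0$, $$\operatorname{pod}(n)=(-1)^n\sum_{\substack{c\in\mathcal C_{P_3}\\ |c|=n}}(-1)^{\ell(c)},$$ where $P_3=\{m(m+1)/2: m\in\mathbb N\}$ is the set of positive triangular numbers.
   Context: $\operatorname{pod}(n)$ is the number of partitions of $n$ in which odd parts are not repeated (even parts may repeat), with $\operatorname{pod}(0)=1$. A composition is an ordered finite sequence of positive integers (including the empty one); $|c|$ is the sum and $\ell(c)$ the number of parts; $\mathcal C_T$ is the set of compositions with all parts in $T$. *)

(* Defs.v *)
From mathcomp Require Import all_boot all_order all_algebra.
Set Implicit Arguments. Unset Strict Implicit. Unset Printing Implicit Defensive.
Import GRing.Theory.

Definition triangular (t : nat) : bool :=
  [exists m : 'I_t.+1, (0 < m) && (m * m.+1 == t.*2)].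

(* A partition of n is encoded by its multiplicity function:
   f i = number of parts equal to i.+1 (parts are in 1..n, multiplicities <= n). *)
Definition is_pod_partition {n : nat} (f : {ffun 'I_n -> 'I_n.+1}) : bool :=
  (\sum_(i < n) i.+1 * f i == n) && [forall i : 'I_n, odd i.+1 ==> (f i <= 1)].

Definition pod (n : nat) : nat := #|[pred f : {ffun 'I_n -> 'I_n.+1} | is_pod_partition f]|.

(* A composition of n with k parts, encoded by a k-tuple t of 'I_n,
   where t_j represents the part t_j.+1 (any composition of n has all parts
   in 1..n and at most n parts). *)
Definition comp_sum {k n : nat} (t : k.-tuple 'I_n) : nat :=
  \sum_(x <- t) x.+1.

Definition comp_in_T (T : pred nat) {k n : nat} (t : k.-tuple 'I_n) : bool :=
  all (fun x : 'I_n => T x.+1) t.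

Definition signed_comp_sum (T : pred nat) (n : nat) : int :=
  \sum_(k < n.+1)
     \sum_(t : k.-tuple 'I_n | comp_in_T T t && (comp_sum t == n))
        ((-1) ^+ k)%R.

(* Main.v *)
Require Import Defs.
From mathcomp Require Import all_boot all_order all_algebra.
From mathcomp Require Import zify ring lra.
Import GRing.Theory.
Local Open Scope ring_scope.

Set Implicit Arguments. Unset Strict Implicit. Unset Printing Implicit Defensive.

Definition eqN (N : nat) (p r : {poly int}) := forall i, (i <= N)%N -> p`_i = r`_i.

Lemma eqN_refl N p : eqN N p p. Proof. by []. Qed.
Lemma eqN_sym N p r : eqN N p r -> eqN N r p. Proof. by move=> H i Hi; rewrite H. Qed.
Lemma eqN_trans N p r s : eqN N p r -> eqN N r s -> eqN N p s.
Proof. by move=> H1 H2 i Hi; rewrite H1 // H2. Qed.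

Lemma eqN_add N p p' r r' : eqN N p p' -> eqN N r r' -> eqN N (p + r) (p' + r').
Proof. by move=> H1 H2 i Hi; rewrite !coefD H1 // H2. Qed.

Lemma eqN_opp N p p' : eqN N p p' -> eqN N (- p) (- p').
Proof. by move=> H1 i Hi; rewrite !coefN H1. Qed.

Lemma eqN_mul N p p' r r' : eqN N p p' -> eqN N r r' -> eqN N (p * r) (p' * r').
Proof.
move=> H1 H2 i Hi; rewrite !coefM; apply: eq_bigr => j _.
have Hj := ltn_ord j.
rewrite H1; last by apply: leq_trans Hi; rewrite -ltnS.
by rewrite H2 // (leq_trans (leq_subr _ _) Hi).
Qed.

Lemma eqN_sum N (I : Type) (s : seq I) (P : pred I) (F G : I -> {poly int}) :
  (forall i, P i -> eqN N (F i) (G i)) ->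
  eqN N (\sum_(i <- s | P i) F i) (\sum_(i <- s | P i) G i).
Proof.
move=> H; elim/big_rec2: _ => [|i x y Pi Hxy]; first exact: eqN_refl.
exact: eqN_add (H _ Pi) Hxy.
Qed.

Lemma eqN_prod N (I : Type) (s : seq I) (P : pred I) (F G : I -> {poly int}) :
  (forall i, P i -> eqN N (F i) (G i)) ->
  eqN N (\prod_(i <- s | P i) F i) (\prod_(i <- s | P i) G i).
Proof.
move=> H; elim/big_rec2: _ => [|i x y Pi Hxy]; first exact: eqN_refl.
exact: eqN_mul (H _ Pi) Hxy.
Qed.

Lemma eqN_cancel N (p r u : {poly int}) : u`_0 = 1 -> eqN N (p * u) (r * u) -> eqN N p r.
Proof.
move=> u0 H i; elim: i {-2}i (leqnn i) => [|m IH] i Hi HiN.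
  by move: Hi; rewrite leqn0 => /eqP ->; have := H 0%N isT; rewrite !coef0M u0 !mulr1.
have := H i HiN; rewrite !coefM !big_ord_recr /= subnn u0 !mulr1.
rewrite (eq_bigr (fun j : 'I_i => r`_j * u`_(i - j))); first by move=> E; apply: (addrI _ E).
move=> j _; rewrite IH //; last by apply: leq_trans HiN; apply: ltnW.
by rewrite -ltnS; apply: leq_trans Hi.
Qed.

Definition q : {poly int} := - 'X.

Lemma coef_q e i : (q ^+ e)`_i = if e == i then (-1) ^+ i else 0.
Proof.
rewrite /q [_ ^+ e]exprNn.
have E : (-1 : {poly int}) ^+ e = ((-1) ^+ e)%:P by rewrite polyC_exp polyCN polyC1.
rewrite E coefCM coefXn; case: eqP => [->|]; first by rewrite eqxx mulr1.
by move=> /eqP; rewrite eq_sym => /negbTE ->; rewrite mulr0.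
Qed.

Lemma qpow_small N e : (N < e)%N -> eqN N (q ^+ e) 0.
Proof.
move=> He i Hi; rewrite coef_q coef0; case: eqP => // Ee.
by move: He; rewrite Ee ltnNge Hi.
Qed.

Lemma eqN_mul0 N p r : eqN N p 0 -> eqN N (p * r) 0.
Proof. by move=> H; rewrite -(mul0r r); apply: eqN_mul. Qed.

Fixpoint gb (N k : nat) : {poly int} :=
  match N, k with
  | 0, 0 => 1
  | 0, _.+1 => 0
  | N'.+1, 0 => 1
  | N'.+1, k'.+1 => gb N' k'.+1 + q ^+ (N' - k') * gb N' k'
  end.

Lemma gb_n0 N : gb N 0 = 1. Proof. by case: N. Qed.

Lemma gb_gt N k : (N < k)%N -> gb N k = 0.
Proof.
elim: N k => [|N IH] [|k] // Hk /=.
rewrite ltnS in Hk; rewrite (IH k.+1) ?(IH k) ?mulr0 ?addr0 //; exact: ltnW.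
Qed.

Definition qp (M : nat) : {poly int} := \prod_(i < M) (1 - q ^+ i.+1).

Lemma qp0 : qp 0 = 1. Proof. by rewrite /qp big_ord0. Qed.

Lemma qpS M : qp M.+1 = qp M * (1 - q ^+ M.+1).
Proof. by rewrite /qp big_ord_recr. Qed.

Lemma gb_prod N k : (k <= N)%N -> gb N k * qp k * qp (N - k) = qp N.
Proof.
elim: N k => [|N IH] [|k] //=.
- by move=> _; rewrite /qp !big_ord0 !mulr1.
- by move=> _; rewrite subn0 mul1r /qp big_ord0 mul1r.
rewrite ltnS => Hk; rewrite subSS.
case: (ltngtP k N) Hk => // [HkN|->] _.
  have E1 : (N - k = (N - k.+1).+1)%N by rewrite subnSK.
  have A : qp (N - k) = qp (N - k.+1) * (1 - q ^+ (N - k)) by rewrite {1}E1 qpS -E1.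
  have -> : (gb N k.+1 + q ^+ (N - k) * gb N k) * qp k.+1 * qp (N - k) =
     (gb N k.+1 * qp k.+1 * qp (N - k.+1)) * (1 - q ^+ (N - k)) +
     q ^+ (N - k) * (gb N k * qp k * qp (N - k)) * (1 - q ^+ k.+1).
    rewrite A (qpS k).
    have key : forall a b c d e f : {poly int}, (a + e * b) * (c * (1 - f)) * (d * (1 - e)) =
      a * (c * (1 - f)) * d * (1 - e) + e * (b * c * (d * (1 - e))) * (1 - f).
      by move=> a b c d e f; ring.
    exact: (key (gb N k.+1) (gb N k) (qp k) (qp (N - k.+1)) (q ^+ (N-k)) (q ^+ k.+1)).
  rewrite (IH k.+1 HkN) (IH k (ltnW HkN)) (qpS N).
  have key2 : forall P e f : {poly int}, P * (1 - e) + e * P * (1 - f) = P * (1 - e * f).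
    by move=> P e f; ring.
  rewrite (key2 (qp N) (q ^+ (N - k)) (q ^+ k.+1)) -exprD.
  by have -> : (N - k + k.+1 = N.+1)%N by lia.
rewrite (gb_gt (ltnSn N)) subnn expr0 mul1r add0r qp0 mulr1 (qpS N) mulrA.
by have := IH N (leqnn N); rewrite subnn qp0 mulr1 => ->.
Qed.

Lemma qbinom (x : {poly int}) N :
  \prod_(i < N) (x + q ^+ i) =
  \sum_(k < N.+1) gb N k * x ^+ (N - k) * q ^+ 'C(k, 2).
Proof.
elim: N => [|N IH].
  by rewrite big_ord0 big_ord1 /= !mulr1.
rewrite big_ord_recr /= IH mulr_suml.
rewrite [RHS]big_ord_recl /= subn0 bin0n expr0 mulr1.
under [in RHS]eq_bigr => k _ do rewrite /bump /= add1n subSS add0n !mulrDl.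
rewrite big_split /= mul1r addrA.
under eq_bigr => k _ do rewrite mulrDr.
rewrite big_split /=; congr (_ + _).
  rewrite big_ord_recl /= gb_n0 subn0 expr0 mulr1 mul1r -exprSr.
  rewrite [X in _ = _ + X]big_ord_recr /= gb_gt // !mul0r addr0.
  congr (_ + _); apply: eq_bigr => k _; rewrite /bump /= add1n.
  have -> : (N - k = (N - k.+1).+1)%N by have := ltn_ord k; lia.
  by rewrite exprS; ring.
apply: eq_bigr => k _.
have Hk := ltn_ord k.
have -> : ('C(k.+1, 2) = 'C(k, 2) + k)%N by rewrite binS bin1.
rewrite exprD; have -> : q ^+ N = q ^+ (N - k) * q ^+ k by rewrite -exprD subnK // -ltnS.
ring.
Qed.

Lemma bin2Z n : ('C(n, 2))%:Z * 2 = n%:Z * (n%:Z - 1).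
Proof.
elim: n => [|n IH]; first by [].
rewrite binS bin1 PoszD mulrDl IH intS; ring.
Qed.

Definition Tz m k := if (m.+1 <= k)%N then 'C(k - m, 2) else 'C(m.+1 - k, 2).

Lemma expo m k : (k <= m + m.+2)%N ->
  (m * (m + m.+2 - k) + 'C(k, 2) = 'C(m, 2) + m * m.+2 + Tz m k)%N.
Proof.
rewrite /Tz => Hk; apply/eqP; rewrite -eqz_nat; apply/eqP.
apply: (@mulIf _ 2) => //.
rewrite !PoszD !PoszM !mulrDl !bin2Z -subzn // !PoszD !intS.
case: ifP => H; rewrite bin2Z -subzn ?intS; try lia.
Qed.

Definition mq (M : nat) : {poly int} := \prod_(i < M) (1 + q ^+ i.+1).

Lemma q_neq0 : q != 0. Proof. by rewrite /q oppr_eq0 polyX_eq0. Qed.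

Lemma spec m : 2 * mq m * mq m.+1 =
  \sum_(k < (m + m.+2).+1) gb (m + m.+2) k * q ^+ Tz m k.
Proof.
have H := qbinom (q ^+ m) (m + m.+2).
rewrite big_split_ord /= in H.
have L1 : \prod_(i < m) (q ^+ m + q ^+ i) = q ^+ 'C(m, 2) * mq m.
  have E : forall i : 'I_m, q ^+ m + q ^+ i = q ^+ i * (1 + q ^+ (m - i)).
    move=> i; rewrite mulrDr mulr1 -exprD subnKC; first exact: addrC.
    exact: ltnW.
  rewrite (eq_bigr _ (fun i _ => E i)).
  rewrite big_split /= prodrXr -bin2_sum big_mkord; congr (_ * _).
  rewrite /mq (reindex_inj rev_ord_inj) /=; apply: eq_bigr => i _.
  by rewrite subKn.
have R1 : \prod_(j < m.+2) (q ^+ m + q ^+ (m + j)) = q ^+ (m * m.+2) * (2 * mq m.+1).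
  have E : forall j : 'I_m.+2, q ^+ m + q ^+ (m + j) = q ^+ m * (1 + q ^+ j).
    by move=> j; rewrite exprD mulrDr mulr1.
  rewrite (eq_bigr _ (fun i _ => E i)).
  rewrite big_split /= prodr_const card_ord -exprM; congr (_ * _).
  by rewrite big_ord_recl /= expr0.
rewrite L1 R1 in H.
have R2 : \sum_(k < (m + m.+2).+1) gb (m + m.+2) k * (q ^+ m) ^+ (m + m.+2 - k) * q ^+ 'C(k, 2)
   = q ^+ ('C(m, 2) + m * m.+2) * \sum_(k < (m + m.+2).+1) gb (m + m.+2) k * q ^+ Tz m k.
  rewrite mulr_sumr; apply: eq_bigr => k _.
  rewrite -exprM -mulrA -exprD expo; last by rewrite -ltnS.
  rewrite exprD mulrCA.  done.
rewrite R2 in H.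
apply: (mulfI (expf_neq0 ('C(m, 2) + m * m.+2) q_neq0)).
rewrite -H exprD.
have key : forall a b d e : {poly int}, a * b * (2 * d * e) = a * d * (b * (2 * e)).
  by move=> a b d e; ring.
exact: (key (q ^+ 'C(m, 2)) (q ^+ (m * m.+2)) (mq m) (mq m.+1)).
Qed.

Lemma prod_trunc N M (F : nat -> {poly int}) :
  (forall i, (N <= i)%N -> eqN N (F i) 1) -> (N <= M)%N ->
  eqN N (\prod_(i < M) F i) (\prod_(i < N) F i).
Proof.
move=> HF /subnKC <-; elim: (M - N)%N => [|d IH]; first by rewrite addn0; exact: eqN_refl.
rewrite addnS big_ord_recr /= -[\prod_(i < N) F i]mulr1.
by apply: eqN_mul => //; apply: HF; apply: leq_addr.
Qed.

Lemma sum_trunc N K M (F : nat -> {poly int}) :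
  (forall i, (K <= i)%N -> eqN N (F i) 0) -> (K <= M)%N ->
  eqN N (\sum_(i < M) F i) (\sum_(i < K) F i).
Proof.
move=> HF /subnKC <-; elim: (M - K)%N => [|d IH]; first by rewrite addn0; exact: eqN_refl.
rewrite addnS big_ord_recr /= -[\sum_(i < K) F i]addr0.
by apply: eqN_add => //; apply: HF; apply: leq_addr.
Qed.

Lemma coef0_prod (I : Type) (s : seq I) (P : pred I) (F : I -> {poly int}) :
  (\prod_(i <- s | P i) F i)`_0 = \prod_(i <- s | P i) (F i)`_0.
Proof.
rewrite -horner_coef0 horner_prod; apply: eq_bigr => i _; exact: horner_coef0.
Qed.

Lemma coef0_qS e : (q ^+ e.+1)`_0 = 0. Proof. by rewrite coef_q. Qed.

Lemma qp_coef0 M : (qp M)`_0 = 1.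
Proof. by rewrite coef0_prod big1 // => i _; rewrite coefB coef0_qS coefC subr0. Qed.

Lemma qp_trunc N M : (N <= M)%N -> eqN N (qp M) (qp N).
Proof.
rewrite /qp; apply: (prod_trunc (F := fun i => 1 - q ^+ i.+1)) => i Hi.
rewrite -[X in eqN _ _ X]subr0; apply: eqN_add; first exact: eqN_refl.
by apply: eqN_opp; apply: qpow_small.
Qed.

Lemma mq_trunc N M : (N <= M)%N -> eqN N (mq M) (mq N).
Proof.
rewrite /mq; apply: (prod_trunc (F := fun i => 1 + q ^+ i.+1)) => i Hi.
rewrite -[X in eqN _ _ X]addr0; apply: eqN_add; first exact: eqN_refl.
by apply: qpow_small.
Qed.

Lemma gbE N L k : (N <= k)%N -> (N <= L - k)%N -> (k <= L)%N ->
  eqN N (qp L * gb L k) 1.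
Proof.
move=> H1 H2 H3.
have G : eqN N (gb L k * qp N * qp N) (qp N).
  apply: (@eqN_trans _ _ (gb L k * qp k * qp (L - k))).
    apply: eqN_mul; last by apply: eqN_sym; apply: qp_trunc.
    by apply: eqN_mul; [exact: eqN_refl| apply: eqN_sym; apply: qp_trunc].
  rewrite (gb_prod H3); apply: qp_trunc; exact: leq_trans H1 H3.
have G2 : eqN N (gb L k * qp N) 1.
  apply: (@eqN_cancel _ _ _ (qp N)); first exact: qp_coef0.
  by rewrite mul1r.
rewrite mulrC; apply: eqN_trans G2.
apply: eqN_mul; first exact: eqN_refl.
exact: qp_trunc (leq_trans H1 H3).
Qed.

Lemma eqN_muln N p r n : eqN N p r -> eqN N (p *+ n) (r *+ n).
Proof. by move=> H i Hi; rewrite !coefMn H. Qed.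

Definition psi N := \sum_(j < N.+1) q ^+ 'C(j.+1, 2).

Lemma bin2_ge j : (j <= 'C(j.+1, 2))%N.
Proof. by rewrite binS bin1 leq_addl. Qed.

Lemma bin2_gt N a : (N.+1 < a)%N -> (N < 'C(a, 2))%N.
Proof.
case: a => // a Ha; apply: leq_trans (bin2_ge a); by [].
Qed.

Lemma tri_sum_trunc N M : (N < M)%N -> eqN N (\sum_(j < M) q ^+ 'C(j.+1, 2)) (psi N).
Proof.
move=> H; apply: (sum_trunc (F := fun j => q ^+ 'C(j.+1, 2))) => // j Hj.
apply: qpow_small; apply: bin2_gt; by rewrite ltnS.
Qed.

Lemma gauss1 N : eqN N (qp N * mq N * mq N) (psi N).
Proof.
have [m Hm] : exists m, m = (N + N).+1 by eexists.
have S := spec m.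
have [L HL] : exists L, L = (m + m.+2)%N by eexists.
rewrite -HL in S.
have E1 : eqN N (qp L * (2 * mq m * mq m.+1)) ((qp N * mq N * mq N) *+ 2).
  have -> : qp L * (2 * mq m * mq m.+1) = (qp L * mq m * mq m.+1) *+ 2.
    have key : forall P a b : {poly int}, P * (2 * a * b) = (P * a * b) *+ 2.
      by move=> P a b; rewrite -mulr_natl; ring.
    exact: key.
  apply: eqN_muln; apply: eqN_mul; first apply: eqN_mul.
  - by apply: qp_trunc; lia.
  - by apply: mq_trunc; lia.
  - by apply: mq_trunc; lia.
have E2 : eqN N (qp L * \sum_(k < L.+1) gb L k * q ^+ Tz m k)
                (\sum_(k < L.+1) q ^+ Tz m k).
  rewrite mulr_sumr; apply: eqN_sum => k _; rewrite mulrA.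
  have Hk : (k <= L)%N by rewrite -ltnS.
  case: (boolP ((N <= k) && (N <= L - k))%N) => [/andP [H1 H2]|HN].
    rewrite -[X in eqN _ _ X]mul1r; apply: eqN_mul; last exact: eqN_refl.
    exact: gbE.
  have HT : (N < Tz m k)%N.
    rewrite /Tz; case: ifP => H; apply: bin2_gt; move: HN H; lia.
  apply: (@eqN_trans _ _ 0); last by apply: eqN_sym; apply: qpow_small.
  by rewrite mulrC; apply: eqN_mul0; apply: qpow_small.
have E3 : \sum_(k < L.+1) q ^+ Tz m k =
     \sum_(j < m.+1) q ^+ 'C(j.+1, 2) + \sum_(j < m.+2) q ^+ 'C(j.+1, 2).
  rewrite -(big_mkord xpredT (fun k => q ^+ Tz m k)).
  rewrite (big_cat_nat _ (n := m.+1)) //=; last by lia.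
  congr (_ + _).
    rewrite big_nat_rev /= big_mkord; apply: eq_bigr => k _; have Hk := ltn_ord k.
    rewrite /Tz add0n subSS; case: ifP => H; first by move: H; lia.
    by congr (q ^+ 'C(_, 2)); lia.
  rewrite -{1}(add0n m.+1) big_addn.
  have -> : (L.+1 - m.+1 = m.+2)%N by lia.
  rewrite big_mkord; apply: eq_bigr => k _; have Hk := ltn_ord k.
  rewrite /Tz; case: ifP => H; last by move: H; lia.
  by congr (q ^+ 'C(_, 2)); lia.
rewrite -S E3 in E2.
have E4 := eqN_trans (eqN_sym E1) E2.
have E5 : eqN N (\sum_(j < m.+1) q ^+ 'C(j.+1, 2) + \sum_(j < m.+2) q ^+ 'C(j.+1, 2)) (psi N *+ 2).
  rewrite mulr2n; apply: eqN_add; apply: tri_sum_trunc; lia.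
move=> i Hi; have := eqN_trans E4 E5 Hi; rewrite !coefMn !mulr2n => E.
lia.
Qed.

Definition odf (i : nat) : {poly int} := if odd i.+1 then 1 - q ^+ i.+1 else 1.
Definition evf (i : nat) : {poly int} := if odd i.+1 then 1 else 1 - q ^+ i.+1.
Definition Od M := \prod_(i < M) odf i.
Definition Ev M := \prod_(i < M) evf i.

Lemma qp_OdEv M : qp M = Od M * Ev M.
Proof.
rewrite /qp /Od /Ev -big_split; apply: eq_bigr => i _.
by rewrite /= /odf /evf; case: ifP; rewrite ?mul1r ?mulr1.
Qed.

Lemma Ev_dbl M : Ev M.*2 = qp M * mq M.
Proof.
elim: M => [|M IH]; first by rewrite /Ev /qp /mq !big_ord0 mulr1.
rewrite doubleS /Ev !big_ord_recr /= -/(Ev M.*2) IH /qp /mq !big_ord_recr /=.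
rewrite /evf /= odd_double /= mulr1.
have -> : q ^+ (M.*2).+2 = q ^+ M.+1 * q ^+ M.+1 by rewrite -exprD addnn doubleS.
have key : forall a b c : {poly int}, a * b * (1 - c * c) = a * (1 - c) * (b * (1 + c)).
  by move=> a b c; ring.
exact: key.
Qed.

Lemma Od_coef0 M : (Od M)`_0 = 1.
Proof.
rewrite coef0_prod big1 // => i _; rewrite /odf; case: ifP => _.
  by rewrite coefB coef0_qS coefC subr0.
by rewrite coefC.
Qed.

Lemma Od_trunc N M : (N <= M)%N -> eqN N (Od M) (Od N).
Proof.
rewrite /Od; apply: (prod_trunc (F := odf)) => i Hi; rewrite /odf; case: ifP => _.
  rewrite -[X in eqN _ _ X]subr0; apply: eqN_add; first exact: eqN_refl.
  by apply: eqN_opp; apply: qpow_small.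
exact: eqN_refl.
Qed.

Lemma Ev_trunc N M : (N <= M)%N -> eqN N (Ev M) (Ev N).
Proof.
rewrite /Ev; apply: (prod_trunc (F := evf)) => i Hi; rewrite /evf; case: ifP => _.
  exact: eqN_refl.
rewrite -[X in eqN _ _ X]subr0; apply: eqN_add; first exact: eqN_refl.
by apply: eqN_opp; apply: qpow_small.
Qed.

Lemma mqOd N : eqN N (mq N * Od N) 1.
Proof.
apply: (@eqN_cancel _ _ _ (qp N)); first exact: qp_coef0.
rewrite mul1r.
have -> : mq N * Od N * qp N = Od N * Ev N.*2 by rewrite Ev_dbl; ring.
apply: (@eqN_trans _ _ (Od N.*2 * Ev N.*2)).
  apply: eqN_mul; last exact: eqN_refl.
  by apply: eqN_sym; apply: Od_trunc; rewrite -addnn leq_addr.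
rewrite -qp_OdEv; apply: qp_trunc; by rewrite -addnn leq_addr.
Qed.

Lemma gauss2 N : eqN N (psi N * Od N) (Ev N).
Proof.
apply: (@eqN_trans _ _ (qp N * mq N * mq N * Od N)).
  by apply: eqN_mul; [apply: eqN_sym; apply: gauss1 | exact: eqN_refl].
rewrite -mulrA; apply: (@eqN_trans _ _ (qp N * mq N * 1)).
  by apply: eqN_mul; [exact: eqN_refl | apply: mqOd].
rewrite mulr1 -Ev_dbl; apply: Ev_trunc; by rewrite -addnn leq_addr.
Qed.

Definition Af (n : nat) (i : 'I_n) (j : 'I_n.+1) : {poly int} :=
  if odd i.+1 ==> (j <= 1)%N then 'X^(i.+1 * j) else 0.
Definition Q n := \prod_(i < n) \sum_(j < n.+1) Af i j.

Lemma Q_coef n : (Q n)`_n = (pod n)%:Z.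
Proof.
rewrite /Q bigA_distr_bigA /= coef_sum.
have E : forall f : {ffun 'I_n -> 'I_n.+1},
    (\prod_(i < n) Af i (f i))`_n = (is_pod_partition f : nat)%:R.
  move=> f; rewrite /is_pod_partition.
  case: (boolP [forall i : 'I_n, odd i.+1 ==> (f i <= 1)%N]) => H.
    rewrite (eq_bigr (fun i : 'I_n => 'X^(i.+1 * f i))); last first.
      by move=> i _; rewrite /Af (forallP H i).
    by rewrite prodrXr coefXn andbT eq_sym.
  move/forallPn: H => [i Hi].
  rewrite (bigD1 i) //= /Af (negbTE Hi) mul0r coef0 andbF.
  by [].
rewrite (eq_bigr _ (fun f _ => E f)).
rewrite /pod -natz -sumr_const [RHS]big_mkcond /=; apply: eq_bigr => f _.
by rewrite inE; case: (is_pod_partition f).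
Qed.

Lemma qpow_X e : q ^+ e = (-1) ^+ e * 'X^e.
Proof. by rewrite /q [LHS]exprNn. Qed.

Lemma Xpow_small N e : (N < e)%N -> eqN N ('X^e) 0.
Proof.
move=> He i Hi; rewrite coefXn coef0; case: eqP => // Ee.
by move: He; rewrite -Ee ltnNge Hi.
Qed.

Lemma A_rel n (i : 'I_n) : eqN n ((\sum_(j < n.+1) Af i j) * evf i) (odf i).
Proof.
rewrite /evf /odf.
have [Ho|Ho] := boolP (odd i.+1).
  have Hn : (0 < n)%N by apply: leq_ltn_trans (ltn_ord i).
  case: n i Ho Hn => [|n] // i Ho _.
  rewrite !big_ord_recl /= big1; last first.
    by move=> j _; rewrite /Af Ho.
  rewrite /Af Ho /= muln0 muln1 addr0 mulr1 qpow_X -signr_odd Ho expr1 mulN1r opprK.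
  exact: eqN_refl.
have E : \sum_(j < n.+1) Af i j = \sum_(j < n.+1) ('X^(i.+1)) ^+ j.
  by apply: eq_bigr => j _; rewrite /Af (negbTE Ho) /= exprM.
rewrite E qpow_X -signr_odd (negbTE Ho) expr0 mul1r.
have -> : (\sum_(j < n.+1) ('X^(i.+1) : {poly int}) ^+ j) * (1 - 'X^(i.+1)) = 1 - ('X^(i.+1)) ^+ n.+1.
  have := subrX1 ('X^(i.+1) : {poly int}) n.+1.
  have key : forall S x y : {poly int}, y - 1 = (x - 1) * S -> S * (1 - x) = 1 - y.
    by move=> S x y H; rewrite -[1 - y]opprB H; ring.
  move=> H; apply: key; exact: H.
rewrite -[X in eqN _ _ X]subr0; apply: eqN_add; first exact: eqN_refl.
apply: eqN_opp; rewrite -exprM; apply: Xpow_small.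
by rewrite mulSn; apply: ltn_addr.
Qed.

Lemma Q_rel n : eqN n (Q n * Ev n) (Od n).
Proof.
rewrite /Q /Ev /Od -big_split; apply: eqN_prod => i _; exact: A_rel.
Qed.

Lemma Q_psi n : eqN n (Q n * psi n) 1.
Proof.
apply: (@eqN_cancel _ _ _ (Od n)); first exact: Od_coef0.
rewrite mul1r -mulrA; apply: (@eqN_trans _ _ (Q n * Ev n)); last exact: Q_rel.
apply: eqN_mul; first exact: eqN_refl.
exact: gauss2.
Qed.

Definition Gf (n : nat) (x : 'I_n) : {poly int} := if triangular x.+1 then q ^+ x.+1 else 0.
Definition W n := \sum_(x : 'I_n) Gf x.
Definition V n := \sum_(k < n.+1) (- W n) ^+ k.

Lemma coef_signM k (p : {poly int}) i : ((-1) ^+ k * p)`_i = (-1) ^+ k * p`_i.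
Proof.
elim: k => [|k IH]; first by rewrite !expr0 !mul1r.
by rewrite !exprS -!mulrA !mulN1r coefN IH.
Qed.

Lemma prod_seq n (s : seq 'I_n) :
  \prod_(x <- s) Gf x =
  if all (fun x : 'I_n => triangular x.+1) s then q ^+ (\sum_(x <- s) x.+1) else 0.
Proof.
elim: s => [|x s IH]; first by rewrite !big_nil.
rewrite !big_cons IH /= /Gf; case: (triangular x.+1) => /=; last by rewrite mul0r.
by case: (all _ s); rewrite ?mulr0 // -exprD.
Qed.

Lemma Wpow n k :
  W n ^+ k = \sum_(t : k.-tuple 'I_n) \prod_(x <- t) Gf x.
Proof.
have -> : W n ^+ k = \prod_(i < k) W n by rewrite prodr_const card_ord.
rewrite /W bigA_distr_bigA /=.
rewrite (reindex (fun t : k.-tuple 'I_n => [ffun i => tnth t i])) /=; last first.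
  apply: onW_bij; exists (fun f : {ffun 'I_k -> 'I_n} => [tuple f i | i < k]).
    by move=> t; apply: eq_from_tnth => i; rewrite tnth_mktuple ffunE.
  by move=> f; apply/ffunP => i; rewrite ffunE tnth_mktuple.
apply: eq_bigr => t _; rewrite big_tuple; apply: eq_bigr => i _; by rewrite ffunE.
Qed.

Lemma Wpow_coef n k :
  (W n ^+ k)`_n = (-1) ^+ n *
    (#|[pred t : k.-tuple 'I_n | comp_in_T triangular t && (comp_sum t == n)]|)%:R.
Proof.
rewrite Wpow coef_sum -sumr_const mulr_sumr [RHS]big_mkcond /=.
apply: eq_bigr => t _; rewrite prod_seq inE /comp_in_T /comp_sum.
case: (all _ t) => /=; last by rewrite coef0.
by rewrite coef_q mulr1.
Qed.

Lemma V_coef n : (V n)`_n = (-1) ^+ n * signed_comp_sum triangular n.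
Proof.
rewrite /V /signed_comp_sum coef_sum mulr_sumr; apply: eq_bigr => k _.
rewrite [(- W n) ^+ k]exprNn coef_signM Wpow_coef sumr_const.
rewrite mulrCA mulr_natr; congr (_ * (_ *+ _)); apply: eq_card => t; by rewrite inE.
Qed.

Lemma pow_low (p : {poly int}) m i : p`_0 = 0 -> (i < m)%N -> (p ^+ m)`_i = 0.
Proof.
move=> p0; elim: m i => [|m IH] i //= Hi.
rewrite exprS coefM big1 // => j _.
case: (posnP j) => [->|Hj]; first by rewrite p0 mul0r.
rewrite IH ?mulr0 //; have := ltn_ord j; lia.
Qed.

Lemma W_coef0 n : (W n)`_0 = 0.
Proof.
rewrite coef_sum big1 // => x _; rewrite /Gf; case: ifP => _; last by rewrite coef0.
exact: coef0_qS.
Qed.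

Lemma V_rel n : eqN n (V n * (1 + W n)) 1.
Proof.
have -> : V n * (1 + W n) = 1 - (- W n) ^+ n.+1.
  have key : forall S x y : {poly int}, y - 1 = (x - 1) * S -> S * (1 - x) = 1 - y.
    by move=> S x y H; rewrite -[1 - y]opprB H; ring.
  have -> : 1 + W n = 1 - (- W n) by rewrite opprK.
  apply: key; exact: subrX1.
move=> i Hi; rewrite coefB pow_low ?subr0 //.
by rewrite coefN W_coef0 oppr0.
Qed.

Lemma tri_lt a b : (a < b)%N -> ('C(a.+1, 2) < 'C(b.+1, 2))%N.
Proof.
move=> H; have H' : (a.+2 <= b.+1)%N by [].
apply: leq_trans (leq_bin2l 2 H'); rewrite (binS a.+1) bin1; lia.
Qed.

Lemma tri_inj a b : 'C(a.+1, 2) = 'C(b.+1, 2) -> a = b.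
Proof.
move=> E; case: (ltngtP a b) => // H.
  by have := tri_lt H; rewrite E ltnn.
by have := tri_lt H; rewrite E ltnn.
Qed.

Lemma psi_coef n i :
  (psi n)`_i = if [exists j : 'I_n.+1, 'C(j.+1, 2) == i] then (-1) ^+ i else 0.
Proof.
rewrite /psi coef_sum; under eq_bigr => j _ do rewrite coef_q.
case: ifP => [/existsP [j0 /eqP Hj0]|/negbT/existsPn H].
  rewrite (bigD1 j0) //= Hj0 eqxx big1 ?addr0 // => j Hj.
  case: eqP => // E; move: Hj; rewrite -Hj0 in E.
  by have := tri_inj E => /val_inj ->; rewrite eqxx.
by rewrite big1 // => j _; rewrite (negbTE (H j)).
Qed.

Lemma bin2S n : ('C(n.+1, 2) * 2 = n.+1 * n)%N.
Proof. by elim: n => // n IH; rewrite binS bin1 mulnDl IH; lia. Qed.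

Lemma triangular_iff n i : (0 < i)%N -> (i <= n)%N ->
  triangular i = [exists j : 'I_n.+1, 'C(j.+1, 2) == i].
Proof.
move=> H0 Hn; apply/idP/idP.
  move/existsP => [m /andP [Hm /eqP E]].
  have Hmn : (m < n.+1)%N by have := ltn_ord m; lia.
  apply/existsP; exists (Ordinal Hmn) => /=; apply/eqP.
  have := bin2S m; lia.
move/existsP => [j /eqP E].
have := bin2S j; have := bin2_ge j => Hj1 Hj2.
have Hj : (j < i.+1)%N by lia.
apply/existsP; exists (Ordinal Hj) => /=.
apply/andP; split; [|apply/eqP]; lia.
Qed.

Lemma W_psi n : eqN n (1 + W n) (psi n).
Proof.
move=> i Hi; rewrite psi_coef coefD coefC.
case: i Hi => [|i] Hi /=.
  rewrite W_coef0 addr0; case: ifP => // /negbT/existsPn H.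
  by have := H ord0.
rewrite add0r coef_sum.
have Hin : (i < n)%N by [].
rewrite (bigD1 (Ordinal Hin)) //= big1; last first.
  move=> x Hx; rewrite /Gf; case: ifP => _; last by rewrite coef0.
  rewrite coef_q; case: eqP => // E; move: Hx.
  have -> : x = Ordinal Hin by apply: val_inj => /=; case: E.
  by rewrite eqxx.
rewrite addr0 /Gf /= -(triangular_iff (ltn0Sn i) Hi).
by case: ifP => _; rewrite ?coef0 // coef_q eqxx.
Qed.


Unset Implicit Arguments.

Theorem corollary1 (n : nat) :
  (pod n)%:Z = (-1) ^+ n * signed_comp_sum triangular n.
Proof.
have H1 : eqN n (Q n * psi n) 1 := @Q_psi n.
have H2 : eqN n (V n * psi n) 1.
  exact: eqN_trans (eqN_mul (eqN_refl (V n)) (eqN_sym (@W_psi n))) (@V_rel n).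
have psi0 : (psi n)`_0 = 1.
  by rewrite -(@W_psi n 0 (leq0n n)) coefD coef1 W_coef0 addr0.
have H3 : eqN n (Q n) (V n) := eqN_cancel psi0 (eqN_trans H1 (eqN_sym H2)).
by rewrite -Q_coef H3 // V_coef.
Qed.
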